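(* Let $C=(C_{i,j})$ be an $m\times n$ evolutionary stable (ES) configuration with $m,n>2$. Then for every integer $k\ge 0$ with $m-1-2k\ge 1$, row $m-1-2k$ is the string $101\,101\cdots101$, i.e.\ $C_{m-1-2k,j}=0$ if $j\equiv 2\pmod 3$ and $C_{m-1-2k,j}=1$ otherwise.
   Context: An $m\times n$ configuration is a $0$-$1$ matrix $C=(C_{i,j})$, $1\le i\le m$, $1\le j\le n$; $C_{i,j}=1$ means lot $(i,j)$ is occupied by a house. Row $1$ is the northernmost, row $m$ the southernmost; column $1$ westernmost, column $n$ easternmost. A house at $(i,j)$ is blocked from sunlight if the three lots $(i,j-1)$, $(i,j+1)$, $(i+1,j)$ all lie inside the grid and are all occupied (lots outside the grid never obstruct sunlight). $C$ is permissible if no house is blocked, and maximal if it is permissible and setting any single empty lot to $1$ yields a non-permissible configuration. A maximal configuration is resistant to predators if, for every empty lot, putting a house on it results in that new house being blocked; it is resistant to altruists if, for every empty lot, putting a house on it results in some other (already existing) house being blocked. An ES configuration is a maximal configuration resistant to both predators and altruists. *)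

(* Defs.v *)
From mathcomp Require Import all_boot.
Set Implicit Arguments. Unset Strict Implicit. Unset Printing Implicit Defensive.

(* An m x n configuration: C i j for 1 <= i <= m, 1 <= j <= n
   (values outside the grid are irrelevant and never consulted). *)
Definition config := nat -> nat -> bool.

Definition in_grid (m n i j : nat) : Prop := 1 <= i <= m /\ 1 <= j <= n.

Definition blocked (m n : nat) (C : config) (i j : nat) : Prop :=
  [/\ 1 < j, j < n, i < m & [&& C i j.-1, C i j.+1 & C i.+1 j]].

Definition permissible (m n : nat) (C : config) : Prop :=
  forall i j, in_grid m n i j -> C i j -> ~ blocked m n C i j.

Definition add_house (C : config) (a b : nat) : config :=
  fun i j => if (i == a) && (j == b) then true else C i j.

Definition maximal (m n : nat) (C : config) : Prop :=
  permissible m n C /\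
  forall a b, in_grid m n a b -> C a b = false ->
    ~ permissible m n (add_house C a b).

Definition resistant_predators (m n : nat) (C : config) : Prop :=
  forall a b, in_grid m n a b -> C a b = false ->
    blocked m n (add_house C a b) a b.

Definition resistant_altruists (m n : nat) (C : config) : Prop :=
  forall a b, in_grid m n a b -> C a b = false ->
    exists i j, [/\ in_grid m n i j, (i, j) <> (a, b), C i j &
                   blocked m n (add_house C a b) i j].

Definition ES (m n : nat) (C : config) : Prop :=
  [/\ maximal m n C, resistant_predators m n C & resistant_altruists m n C].

(* Main.v *)
Require Import Defs.
From mathcomp Require Import all_boot zify.
Set Implicit Arguments. Unset Strict Implicit. Unset Printing Implicit Defensive.

Definition Good (m n : nat) (C : config) : Prop :=
  [/\ 2 < m, 2 < n,
   (forall a b, 1 <= a <= m -> 1 <= b <= n -> C a b = false ->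
      [/\ 1 < b < n, a < m, C a b.-1, C a b.+1 & C a.+1 b]),
   (forall i j, 1 <= i -> 1 < j -> j < n -> i < m -> C i j -> C i j.-1 -> C i j.+1 ->
      C i.+1 j = false) &
   (forall a b, 1 <= a <= m -> 1 <= b <= n -> C a b = false ->
      [/\ 2 < b, C a (b - 2) & C a.+1 b.-1] \/ [/\ b.+2 <= n, C a b.+2 & C a.+1 b.+1] \/
      [/\ 1 < a, C a.-1 b.-1, C a.-1 b & C a.-1 b.+1])].

Lemma Good_of_ES m n C : 2 < m -> 2 < n -> ES m n C -> Good m n C.
Proof.
move=> hm hn [[hperm _] hpred halt].
have perm : forall i j, 1 <= i -> 1 < j -> j < n -> i < m -> C i j -> C i j.-1 -> C i j.+1 ->
      C i.+1 j = false.
  move=> i j h1 h2 h3 h4 hc hl hr; apply/negbTE/negP => hb.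
  apply: (hperm i j _ hc); first by rewrite /in_grid; lia.
  by split => //; rewrite hl hr hb.
split => //.
- move=> a b ha hb hc.
  have [h1 h2 h3 /and3P[]] := hpred a b (conj ha hb) hc.
  rewrite /add_house.
  have -> : (b.-1 == b) = false by apply/eqP; lia.
  have -> : (b.+1 == b) = false by apply/eqP; lia.
  have -> : (a.+1 == a) = false by apply/eqP; lia.
  rewrite !andbF /= => x y z; split => //; lia.
- move=> a b ha hb hc.
  have [i [j [hg hne hcij [h1 h2 h3 /and3P[]]]]] := halt a b (conj ha hb) hc.
  rewrite /add_house.
  case: (boolP ((i == a) && (j.-1 == b))) => [/andP[/eqP ei /eqP ej] | n1].
    subst i => _ x y; right; left.
    move: x y; have -> : (j.+1 == b) = false by apply/eqP; lia.
    have -> : (a.+1 == a) = false by apply/eqP; lia.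
    rewrite !andbF => x y.
    have -> : b.+2 = j.+1 by lia.
    have -> : b.+1 = j by lia.
    split => //; lia.
  case: (boolP ((i == a) && (j.+1 == b))) => [/andP[/eqP ei /eqP ej] | n2].
    subst i => x _ y; left.
    move: y; have -> : (a.+1 == a) = false by apply/eqP; lia.
    rewrite ?andbF => y.
    have -> : b - 2 = j.-1 by lia.
    have -> : b.-1 = j by lia.
    split => //; lia.
  case: (boolP ((i.+1 == a) && (j == b))) => [/andP[/eqP ei /eqP ej] | n3].
    subst a b => x y _; right; right.
    split => //; case: hg => /= ? ?; lia.
  move=> x y z; exfalso.
  apply: (hperm i j hg hcij); split => //; by rewrite x y z.
Qed.

Definition Cm (n : nat) (C : config) : config := fun i j => C i (n.+1 - j).

Lemma Good_mirror m n C : Good m n C -> Good m n (Cm n C).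
Proof.
case=> hm hn hpred hperm halt; rewrite /Cm; split => //.
- move=> a b ha hb hc.
  have [/andP[h1 h2] h3 h4 h5 h6] := hpred a (n.+1 - b) ha ltac:(lia) hc.
  have e1 : n.+1 - b.-1 = (n.+1 - b).+1 by lia.
  have e2 : n.+1 - b.+1 = (n.+1 - b).-1 by lia.
  rewrite e1 e2; split => //; lia.
- move=> i j h1 h2 h3 h4 hc hl hr.
  have e1 : n.+1 - j.-1 = (n.+1 - j).+1 by lia.
  have e2 : n.+1 - j.+1 = (n.+1 - j).-1 by lia.
  rewrite e1 e2 in hl hr.
  exact: (hperm i (n.+1 - j) h1 ltac:(lia) ltac:(lia) h4 hc hr hl).
- move=> a b ha hb hc.
  have [[h1 h2 h3]|[[h1 h2 h3]|[h1 h2 h3 h4]]] := halt a (n.+1 - b) ha ltac:(lia) hc.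
  + right; left.
    have e1 : n.+1 - b.+2 = n.+1 - b - 2 by lia.
    have e2 : n.+1 - b.+1 = (n.+1 - b).-1 by lia.
    rewrite e1 e2; split => //; lia.
  + left.
    have e1 : n.+1 - (b - 2) = (n.+1 - b).+2 by lia.
    have e2 : n.+1 - b.-1 = (n.+1 - b).+1 by lia.
    rewrite e1 e2; split => //; lia.
  + right; right.
    have e1 : n.+1 - b.-1 = (n.+1 - b).+1 by lia.
    have e2 : n.+1 - b.+1 = (n.+1 - b).-1 by lia.
    rewrite e1 e2; split => //.
Qed.

Lemma Cm_invol n C i j : 1 <= j <= n -> Cm n C i (n.+1 - j) = C i j.
Proof. move=> hj; rewrite /Cm; congr C; lia. Qed.

Fixpoint zc (f : nat -> bool) (x : nat) : nat :=
  if x is y.+1 then zc f y + f y.+1 else 0.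

Definition Z (C : config) (a : nat) : nat -> bool := fun j => ~~ C a j.

Lemma zcS f x : zc f x.+1 = zc f x + f x.+1.
Proof. by []. Qed.

Lemma zc_pred (f : nat -> bool) x : 0 < x -> zc f x = zc f x.-1 + f x.
Proof. by case: x. Qed.

Lemma zc_mono (f : nat -> bool) x y : x <= y -> zc f x <= zc f y.
Proof.
elim: y => [|y IH]; first by rewrite leqn0 => /eqP ->.
rewrite leq_eqVlt => /orP[/eqP -> //|]; rewrite ltnS => /IH h.
rewrite zcS; lia.
Qed.

Lemma zc_gap (f : nat -> bool) x d y : x < d -> d <= y -> f d -> zc f x < zc f y.
Proof.
move=> h1 h2 hf.
have : zc f x <= zc f d.-1 by apply: zc_mono; lia.
have : zc f d <= zc f y by apply: zc_mono.
rewrite (zc_pred f (_ : 0 < d)); last by lia.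
rewrite hf; lia.
Qed.

Lemma zc_const (f : nat -> bool) x y : x <= y -> (forall d, x < d <= y -> f d = false) -> zc f y = zc f x.
Proof.
elim: y => [|y IH]; first by rewrite leqn0 => /eqP ->.
rewrite leq_eqVlt => /orP[/eqP -> //|]; rewrite ltnS => hxy h.
rewrite zcS IH //; last by move=> d hd; apply: h; lia.
rewrite h //; lia.
Qed.

Lemma zc_pos (f : nat -> bool) x : 0 < zc f x -> exists d, 0 < d <= x /\ f d.
Proof.
elim: x => [|x IH] //; rewrite zcS.
case hf: (f x.+1).
  by move=> _; exists x.+1; split => //; lia.
rewrite addn0 => /IH [d [h1 h2]]; exists d; split => //; lia.
Qed.

Lemma interlace_inv (A B : nat -> bool) n e :
  (forall b b', 0 < b -> b < b' -> b' <= n -> B b -> B b' -> exists c, b < c < b' /\ A c) ->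
  (e = 1 \/ forall b, 0 < b <= n -> B b -> exists c, 0 < c < b /\ A c) ->
  forall y, y <= n -> zc B y <= zc A y + e /\
    (zc B y = zc A y + e ->
      (exists b, [/\ 0 < b <= y, B b & forall c, b < c <= y -> A c = false]) \/
      (forall c, 0 < c <= y -> A c = false)).
Proof.
move=> Hb He; elim=> [|y IH] hy.
  split; first by [].
  by move=> _; right => c; lia.
have [IH1 IH2] := IH (ltnW hy).
rewrite !zcS.
case hB: (B y.+1); case hA: (A y.+1) => /=.
- split; first lia.
  move=> heq; left; exists y.+1; split => //; lia.
- have hlt : zc B y < zc A y + e.
    rewrite ltn_neqAle IH1 andbT; apply/eqP => heq.
    case: (IH2 heq) => [[b [/andP[hb0 hby] hBb hno]]|hno].
      have [c [/andP[c1 c2] hc]] := Hb b y.+1 hb0 ltac:(lia) hy hBb hB.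
      by rewrite hno in hc; lia.
    case: He => [he|hf].
      have := IH1; rewrite heq he => _.
      have [b [hb hBb]] : exists b, 0 < b <= y /\ B b.
        apply: zc_pos; move: heq; rewrite he; lia.
      have [c [/andP[c1 c2] hc]] := Hb b y.+1 ltac:(lia) ltac:(lia) hy hBb hB.
      by rewrite hno in hc; lia.
    have [c [/andP[c1 c2] hc]] := hf y.+1 ltac:(lia) hB.
    by rewrite hno in hc; lia.
  split; first lia.
  move=> heq; left; exists y.+1; split => //; lia.
- split; first lia.
  move=> heq; lia.
- split; first lia.
  rewrite !addn0 => heq.
  case: (IH2 heq) => [[b [hb hBb hno]]|hno].
    left; exists b; split => //; first lia.
    move=> c /andP[c1 c2]; case: (ltngtP c y.+1) => [hc||->] //; first (apply: hno; lia).
    lia.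
  right => c /andP[c1 c2]; case: (ltngtP c y.+1) => [hc||->] //; first (apply: hno; lia).
  lia.
Qed.

Lemma interlace (A B : nat -> bool) n e :
  (forall b b', 0 < b -> b < b' -> b' <= n -> B b -> B b' -> exists c, b < c < b' /\ A c) ->
  (e = 1 \/ forall b, 0 < b <= n -> B b -> exists c, 0 < c < b /\ A c) ->
  forall y, y <= n -> zc B y <= zc A y + e.
Proof. by move=> h1 h2 y hy; case: (interlace_inv h1 h2 hy). Qed.

Section Basic.
Variables (m n : nat) (C : config).
Hypothesis G : Good m n C.

Lemma Gm : 2 < m. Proof. by case: G. Qed.
Lemma Gn : 2 < n. Proof. by case: G. Qed.

Lemma pred_ a b : 1 <= a <= m -> 1 <= b <= n -> C a b = false ->
      [/\ 1 < b < n, a < m, C a b.-1, C a b.+1 & C a.+1 b].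
Proof. by case: G => _ _ h _ _; apply: h. Qed.

Lemma perm_ i j : 1 <= i -> 1 < j -> j < n -> i < m -> C i j -> C i j.-1 -> C i j.+1 ->
      C i.+1 j = false.
Proof. by case: G => _ _ _ h _; apply: h. Qed.

Lemma alt_ a b : 1 <= a <= m -> 1 <= b <= n -> C a b = false ->
      [/\ 2 < b, C a (b - 2) & C a.+1 b.-1] \/ [/\ b.+2 <= n, C a b.+2 & C a.+1 b.+1] \/
      [/\ 1 < a, C a.-1 b.-1, C a.-1 b & C a.-1 b.+1].
Proof. by case: G => _ _ _ _ h; apply: h. Qed.

Lemma house_of a b : 1 <= a <= m -> 1 <= b <= n -> (~~ (1 < b < n) || (m <= a)) -> C a b.
Proof.
move=> ha hb h; apply/negPn/negP => /negbTE hc.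
have [/andP[h1 h2] h3 _ _ _] := pred_ ha hb hc; move: h; rewrite h1 h2 /=; lia.
Qed.

Lemma bottom j : 1 <= j <= n -> C m j.
Proof. move=> hj; apply: house_of => //; first (have := Gm; lia). by rewrite leqnn orbT. Qed.

Lemma col1 i : 1 <= i <= m -> C i 1.
Proof. move=> hi; apply: house_of => //; have := Gn; lia. Qed.

Lemma coln i : 1 <= i <= m -> C i n.
Proof. move=> hi; apply: house_of => //; first (have := Gn; lia). by rewrite ltnn andbF. Qed.

Lemma above a b : 1 <= a -> a < m -> 1 <= b <= n -> C a.+1 b = false -> C a b.
Proof.
move=> h1 h2 hb hc; apply/negPn/negP => /negbTE hc'.
have ha : 1 <= a <= m by lia.
have [_ _ _ _ x] := pred_ ha hb hc'.
by rewrite hc in x.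
Qed.

Lemma window a c : 1 <= a -> a < m -> 1 < c < n -> C a.+1 c ->
  ~~ [&& C a c.-1, C a c & C a c.+1].
Proof.
move=> h1 h2 /andP[h3 h4] hc; apply/negP => /and3P[x y z].
by rewrite (perm_ h1 h3 h4 h2 y x z) in hc.
Qed.

Lemma betw u : 1 <= u -> u < m ->
  forall b b', 0 < b -> b < b' -> b' <= n -> Z C u.+1 b -> Z C u.+1 b' ->
  exists c, b < c < b' /\ Z C u c.
Proof.
rewrite /Z => h1 h2 b b' hb hbb hb' /negbTE z1 /negbTE z2.
have hu1 : 1 <= u.+1 <= m by lia.
have hbn : 1 <= b <= n by lia.
have [/andP[q1 q2] _ _ r1 _] := pred_ hu1 hbn z1.
have hbb2 : b.+1 < b'.
  rewrite ltn_neqAle hbb andbT; apply/eqP => e; by rewrite e z2 in r1.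
have Cub : C u b by apply: above => //; lia.
case hc1: (C u b.+1); last by exists b.+1; split; [lia | rewrite hc1].
case hc2: (C u b.+2); last first.
  case: (ltngtP b.+2 b') => [lt||eq].
  - by exists b.+2; split; [lia | rewrite hc2].
  - lia.
  - by move: hc2; rewrite eq (above h1 h2 _ z2) //; lia.
have e1 : 1 < b.+1 by lia.
have e2 : b.+1 < n by lia.
have := perm_ h1 e1 e2 h2 hc1 Cub hc2.
by rewrite r1.
Qed.

Lemma first_ u : 1 <= u -> u < m -> C u.+1 2 ->
  forall b, 0 < b <= n -> Z C u.+1 b -> exists c, 0 < c < b /\ Z C u c.
Proof.
rewrite /Z => h1 h2 h22 b hb /negbTE z.
have hb3 : 2 < b.
  case: (ltngtP b 2) => [lt||e]; last by move: h22; rewrite -e z.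
  - have : b = 1 by lia.
    move=> e; move: z; rewrite e col1 //; lia.
  - by [].
case hc2: (C u 2); last by exists 2; split; [lia | rewrite hc2].
case hc3: (C u 3); last first.
  case: (ltngtP 3 b) => [lt||eq].
  - by exists 3; split; [lia | rewrite hc3].
  - lia.
  - by move: hc3; rewrite eq (above h1 h2 _ z) //; lia.
have e2 : 2 < n := Gn.
have hu : 1 <= u <= m by lia.
have := perm_ h1 (isT : 1 < 2) e2 h2 hc2 (col1 hu) hc3.
by rewrite h22.
Qed.

Lemma I4 u : 1 <= u -> u < m -> forall y, y <= n -> zc (Z C u.+1) y <= zc (Z C u) y + 1.
Proof. move=> h1 h2; apply: interlace; [exact: betw | by left]. Qed.

Lemma I1 u : 1 <= u -> u < m -> C u.+1 2 ->
  forall y, y <= n -> zc (Z C u.+1) y <= zc (Z C u) y + 0.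
Proof. move=> h1 h2 h3; apply: interlace; [exact: betw | right; exact: first_]. Qed.

End Basic.

Ltac L := repeat match goal with
  | H : is_true (?c _ _) |- _ => is_var c; clear H
  | H : ?c _ _ = _ |- _ => is_var c; clear H
  end; lia.

Lemma Zt C a j : C a j = false -> Z C a j = true. Proof. by rewrite /Z => ->. Qed.
Lemma Zf C a j : C a j = true -> Z C a j = false. Proof. by rewrite /Z => ->. Qed.

Lemma zc_le (f : nat -> bool) x : zc f x <= x.
Proof. elim: x => [|x IH] //; rewrite zcS; case: (f x.+1) => /=; L. Qed.

Lemma top_descent m n C (G : Good m n C) x0 :
  (forall x a, x < x0 -> x <= n -> 1 <= a <= m -> 3 * zc (Z C a) x <= x.+1) ->
  forall y, y < x0 -> y <= n -> C 1 y = false -> C 2 y.+1 = false ->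
    3 * zc (Z C 1) y = y.+1 -> False.
Proof.
move=> Hd; elim/ltn_ind => y IH hy0 hyn c1 c2 ht.
have hm := Gm G; have hn := Gn G.
have hy00 : y != 0 by apply/eqP => e; move: ht; rewrite e.
have hy1 : 1 <= y <= n by L.
have ha1 : 1 <= 1 <= m by L.
have [/andP[p1 p2] _ p3 p4 p5] := pred_ G ha1 hy1 c1.
case: (alt_ G ha1 hy1 c1) => [[l1 l2 l3]|[[r1 r2 r3]|[u1 _ _ _]]]; last by [];
  last by rewrite c2 in r3.
have [z ez] : exists z, y = z.+3 by exists (y - 3); L.
subst y.
move: l2 l3 p3; rewrite !subSS subn0 /= => l2 l3 p3.
move: ht; rewrite !zcS (Zt c1) (Zf l2) (Zf p3) /= !addn0 => ht.
have hz : 0 < z.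
  move: ht; case: z {IH hy0 hyn c1 c2 p1 p2 p4 p5 hy00 hy1 l1 l2 l3 p3} => //.
have [w ew] : exists w, z = w.+1 by exists z.-1; L.
subst z.
have d4 := Hd w 1 ltac:(L) ltac:(L) ha1.
move: ht; rewrite zcS => ht.
have c13 : C 1 w.+1 = false.
  case h: (C 1 w.+1) => //; move: ht; rewrite (Zf h) addn0 => ht; L.
rewrite (Zt c13) in ht.
have hy3 : 1 <= w.+1 <= n by L.
have [_ _ _ _ q3] := pred_ G ha1 hy3 c13.
have c22 : C 2 w.+2 = false.
  case h22 : (C 2 w.+2) => //.
  have hy2 : 1 <= w.+2 <= n by L.
  have j1 : 1 < w.+2 by L.
  have j2 : w.+2 < n by L.
  have z1 := perm_ G (isT : 1 <= 2) j1 j2 hm h22 q3 l3.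
  have k1 : 1 < w.+3 by L.
  have k2 : w.+3 < n by L.
  have z2 := perm_ G (isT : 1 <= 2) k1 k2 hm l3 h22 p5.
  have h3 : 1 <= 3 <= m by L.
  have [_ _ _ ww _] := pred_ G h3 hy2 z1.
  by rewrite z2 in ww.
apply: (IH w.+1) => //; first L.
- L.
- rewrite zcS (Zt c13); L.
Qed.

Lemma density m n C (G : Good m n C) :
  forall x a, x <= n -> 1 <= a <= m -> 3 * zc (Z C a) x <= x.+1.
Proof.
have hm := Gm G; have hn := Gn G.
elim/ltn_ind => x IH a hx ha.
rewrite leqNgt; apply/negP => hv.
have hc1 : C a 1 := col1 G ha.
have hx3 : 2 < x.
  move: hv; case: x {IH hx} => [|[|[|x]]] //.
  - by rewrite zcS (Zf hc1).
  - rewrite !zcS (Zf hc1) /=; case: (Z C a 2) => /=; L.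
have [z ez] : exists z, x = z.+3 by exists (x - 3); L.
subst x.
have i2 := IH z.+2 ltac:(L) a ltac:(L) ha.
have i1 := IH z.+1 ltac:(L) a ltac:(L) ha.
have i0 := IH z ltac:(L) a ltac:(L) ha.
move: hv; rewrite zcS => hv.
have cx : C a z.+3 = false.
  case h: (C a z.+3) => //; move: hv; rewrite (Zf h) addn0 => hv; L.
rewrite (Zt cx) in hv.
have hx1 : 1 <= z.+3 <= n by L.
have [/andP[p1 p2] p3 p4 p5 p6] := pred_ G ha hx1 cx.
move: hv; rewrite zcS (Zf p4) addn0 => hv.
have cx2 : C a z.+1 = false.
  case h: (C a z.+1) => //; move: hv; rewrite zcS (Zf h) addn0 => hv; L.
have tight : 3 * zc (Z C a) z.+1 = z.+2.
  move: hv; rewrite zcS (Zt cx2) => hv; move: i0 i1; rewrite zcS (Zt cx2); L.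
have full : 3 * zc (Z C a) z.+3 = z.+4.+1.
  rewrite zcS (Zt cx) zcS (Zf p4) addn0; L.
have hx2n : 1 <= z.+1 <= n by L.
have [_ _ q3 _ q5] := pred_ G ha hx2n cx2.
case: (ltngtP a 1) => [|ha2|ea]; first L; last first.
-
  subst a.
  have c21 : C 2 z.+2 = false.
    case h: (C 2 z.+2) => //.
    have h11 : 1 <= 1 <= m by L.
    case: (alt_ G h11 hx2n cx2) => [[l1 l2 l3]|[[r1 r2 r3]|[u1 _ _ _]]] //; last first.
      by rewrite cx in r2.
    have j1 : 1 < z.+1 by L.
    have j2 : z.+1 < n by L.
    have z1 := perm_ G (isT : 1 <= 2) j1 j2 hm q5 l3 h.
    have k1 : 1 < z.+2 by L.
    have k2 : z.+2 < n by L.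
    have z2 := perm_ G (isT : 1 <= 2) k1 k2 hm h q5 p6.
    have h3 : 1 <= 3 <= m by L.
    have [_ _ _ w _] := pred_ G h3 hx2n z1.
    by rewrite z2 in w.
  apply: (top_descent G (x0 := z.+3) _ (y := z.+1)).
  + move=> x' a' hx' hx'n ha'; exact: IH.
  + L.
  + L.
  + exact: cx2.
  + exact: c21.
  + exact: tight.
-
  have [u eu] : exists u, a = u.+1 by exists a.-1; L.
  subst a.
  have hu : 1 <= u <= m by L.
  have cu1 : C u z.+2 = false.
    case h: (C u z.+2) => //.
    have hxm1 : 1 <= z.+2 <= n by L.
    have w1 : C u z.+1 by apply: (above G) => //; L.
    have w2 : C u z.+3 by apply: (above G) => //; L.
    have k1 : 1 < z.+2 by L.
    have k2 : z.+2 < n by L.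
    have k3 : u < m by L.
    have k0 : 1 <= u by L.
    have := perm_ G k0 k1 k2 k3 h w1 w2.
    by rewrite p4.
  have hxm1 : 1 <= z.+2 <= n by L.
  have [[l1 l2 l3]|[[r1 r2 r3]|[v1 v2 v3 v4]]] := alt_ G hu hxm1 cu1.
  + by rewrite cx2 in l3.
  + by rewrite cx in r3.
  have [w ew] : exists w, u = w.+1 by exists u.-1; L.
  subst u.
  move: v2 v3 v4 => /= v2 v3 v4.
  have k3 : w.+1 < m by L.
  have k0 : 1 <= w.+1 by L.
  have cA2 : C w.+2 2 = false.
    case h: (C w.+2 2) => //.
    have i := I1 G k0 k3 h hx.
    have cux : C w.+1 z.+3 by apply: (above G) => //; L.
    rewrite addn0 (zcS (Z C w.+1) z.+2) (Zf cux) addn0 in i.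
    have i' := IH z.+2 ltac:(L) w.+1 ltac:(L) hu.
    L.
  have cU2 : C w.+1 2 = false.
    case h: (C w.+1 2) => //.
    have k4 : w < m by L.
    have hw : 1 <= w by L.
    have i4 := I4 G k0 k3 hx.
    have i5 := I1 G hw k4 h hx.
    rewrite addn0 (zcS (Z C w) z.+2) (zcS (Z C w) z.+1) (zcS (Z C w) z) (Zf v2) (Zf v3) (Zf v4) !addn0 in i5.
    have i6 := IH z ltac:(L) w ltac:(L) ltac:(L).
    L.
  have h2 : 1 <= 2 <= n by L.
  have [_ _ _ _] := pred_ G hu h2 cU2.
  by rewrite cA2.
Qed.

Section Main.
Variables (m n : nat) (C : config).
Hypothesis G : Good m n C.

Lemma win_count a T :
  (forall t, t < T -> ~~ [&& C a (3 * t + 1), C a (3 * t + 2) & C a (3 * t + 3)]) ->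
  T <= zc (Z C a) (3 * T).
Proof.
elim: T => [|T IH] h //.
have := IH (fun t ht => h t (ltnW ht)).
have := h T (ltnSn T).
rewrite (_ : 3 * T.+1 = (3 * T).+3); last L.
rewrite !zcS /Z (_ : 3 * T + 1 = (3 * T).+1); last L.
rewrite (_ : 3 * T + 2 = (3 * T).+2); last L.
rewrite (_ : 3 * T + 3 = (3 * T).+3); last L.
case: (C a (3 * T).+1); case: (C a (3 * T).+2); case: (C a (3 * T).+3) => //= _; L.
Qed.

Lemma L1 a T : 1 <= a <= m -> 3 * T + 1 <= n ->
  (forall t, t < T -> ~~ [&& C a (3 * t + 1), C a (3 * t + 2) & C a (3 * t + 3)]) ->
  C a (3 * T + 1).
Proof.
move=> ha hT hw.
have h1 := win_count hw.
have h2 := density G hT ha.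
move: h2; rewrite (_ : 3 * T + 1 = (3 * T).+1); last L.
rewrite zcS; case h: (C a (3 * T).+1) => //; rewrite (Zt h) => h2; L.
Qed.


End Main.

Definition Rrow (n : nat) (C : config) a := forall j, 1 <= j <= n -> C a j = ~~ (j %% 3 == 2).

Lemma Rrow_of_windows m n C (G : Good m n C) N a : n = 3 * N -> 1 <= a <= m ->
  (forall t, t < N -> ~~ [&& C a (3 * t + 1), C a (3 * t + 2) & C a (3 * t + 3)]) ->
  Rrow n C a.
Proof.
move=> hn ha hw.
have one1 : forall t, t < N -> C a (3 * t + 1).
  move=> t ht; apply: (L1 G) => //; first L.
  by move=> t' ht'; apply: hw; L.
have GM := Good_mirror G.
have one3 : forall t, t < N -> C a (3 * t + 3).
  move=> t ht.
  have hT : 3 * (N.-1 - t) + 1 <= n by L.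
  have := L1 GM (T := N.-1 - t) ha hT.
  rewrite /Cm (_ : n.+1 - (3 * (N.-1 - t) + 1) = 3 * t + 3); last L.
  apply.
  move=> t' ht'.
  rewrite (_ : n.+1 - (3 * t' + 1) = 3 * (N.-1 - t') + 3); last L.
  rewrite (_ : n.+1 - (3 * t' + 2) = 3 * (N.-1 - t') + 2); last L.
  rewrite (_ : n.+1 - (3 * t' + 3) = 3 * (N.-1 - t') + 1); last L.
  have := hw (N.-1 - t') ltac:(L).
  by case: (C a (3 * (N.-1 - t') + 1)); case: (C a (3 * (N.-1 - t') + 2));
     case: (C a (3 * (N.-1 - t') + 3)).
move=> j hj.
have [t [r [hr ej]]] : exists t r, r < 3 /\ j = 3 * t + r.+1 by exists (j.-1 %/ 3), (j.-1 %% 3); L.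
have htN : t < N by L.
subst j.
move: hj; case: r hr => [|[|[|r]]] // _ hj.
- rewrite (_ : (3 * t + 1) %% 3 == 2 = false); last by apply/eqP; L.
  by rewrite one1.
- rewrite (_ : (3 * t + 2) %% 3 == 2 = true); last by apply/eqP; L.
  have := hw t htN; rewrite one1 // one3 //=.
  by case: (C a (3 * t + 2)).
- rewrite (_ : (3 * t + 3) %% 3 == 2 = false); last by apply/eqP; L.
  by rewrite one3.
Qed.


Lemma win3 m n C (G : Good m n C) a c : 1 <= a -> a < m -> 1 < c < n -> C a.+1 c ->
  ~~ [&& C a c.-1, C a c & C a c.+1].
Proof. move=> h1 h2 h3 h4; exact: (window G h1 h2 h3 h4). Qed.

Lemma Rrow_of_above m n C (G : Good m n C) N a : n = 3 * N -> 1 <= a -> a < m ->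
  (forall t, t < N -> C a.+1 (3 * t + 2)) -> Rrow n C a.
Proof.
move=> hn h1 h2 hab; apply: (Rrow_of_windows G hn) => //; first L.
move=> t ht.
have hc : 1 < 3 * t + 2 < n by L.
have := win3 G h1 h2 hc (hab t ht).
rewrite (_ : (3 * t + 2).-1 = 3 * t + 1); last L.
by rewrite (_ : (3 * t + 2).+1 = 3 * t + 3); last L.
Qed.

Lemma main0 m n C (G : Good m n C) N : n = 3 * N ->
  forall k, 1 <= m - 1 - 2 * k -> Rrow n C (m - 1 - 2 * k).
Proof.
have hm := Gm G.
move=> hn; elim=> [|k IH] hk.
  rewrite muln0 subn0.
  apply: (Rrow_of_above G hn); [L | L |].
  move=> t ht; rewrite (_ : (m - 1).+1 = m); last L.
  apply: (bottom G); L.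
have hR := IH ltac:(L).
apply: (Rrow_of_above G hn); [L | L |].
move=> t ht.
have hz : C (m - 1 - 2 * k) (3 * t + 2) = false.
  rewrite hR; last L.
  by rewrite (_ : (3 * t + 2) %% 3 == 2 = true) //; apply/eqP; L.
apply: (above G); [L | L | L |].
by rewrite (_ : (m - 1 - 2 * k.+1).+2 = m - 1 - 2 * k); last L.
Qed.

Definition Hw (n : nat) (C : config) a (P : nat -> bool) :=
  forall c, 1 < c < n -> P c -> ~~ [&& C a c.-1, C a c & C a c.+1].

Lemma Hw_mirror n C a P : Hw n C a P -> Hw n (Cm n C) a (fun c => P (n.+1 - c)).
Proof.
move=> h c hc hp; rewrite /Cm.
have := h (n.+1 - c) ltac:(L) hp.
rewrite (_ : n.+1 - c.-1 = (n.+1 - c).+1); last L.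
rewrite (_ : n.+1 - c.+1 = (n.+1 - c).-1); last L.
by case: (C a (n.+1 - c).+1); case: (C a (n.+1 - c)); case: (C a (n.+1 - c).-1).
Qed.

Lemma ones1 m n C (G : Good m n C) a (P : nat -> bool) : 1 <= a <= m ->
  (forall t, 3 * t + 2 < n -> P (3 * t + 2)) -> Hw n C a P ->
  forall T, 3 * T + 1 <= n -> C a (3 * T + 1).
Proof.
move=> ha hP hw T hT; apply: (L1 G) => // t ht.
have hc : 1 < 3 * t + 2 < n by L.
have := hw _ hc (hP t ltac:(L)).
rewrite (_ : (3 * t + 2).-1 = 3 * t + 1); last L.
by rewrite (_ : (3 * t + 2).+1 = 3 * t + 3); last L.
Qed.

Lemma rho2 m n C (G : Good m n C) N : n = 3 * N + 2 -> False.
Proof.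
move=> hn.
have hm := Gm G; have hnn := Gn G.
have key : forall a, 1 <= a <= m -> Hw n C a (fun c => c %% 3 != 0) ->
    C a 3 = false /\ forall c, 1 <= c <= n -> c %% 3 != 0 -> C a c.
  move=> a ha hw.
  have hP1 : forall t, 3 * t + 2 < n -> (3 * t + 2) %% 3 != 0.
    by move=> t ht; apply/eqP; L.
  have o1 := ones1 G ha hP1 hw.
  have GM := Good_mirror G.
  have hw' := Hw_mirror hw.
  have hP2 : forall t, 3 * t + 2 < n -> (n.+1 - (3 * t + 2)) %% 3 != 0.
    by move=> t ht; apply/eqP; L.
  have o2 := ones1 GM ha hP2 hw'.
  have all : forall c, 1 <= c <= n -> c %% 3 != 0 -> C a c.
    move=> c hc hc3.
    have [[T eT]|[s es]] : (exists T, c = 3 * T + 1) \/ (exists s, c = 3 * s + 2).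
      case e: (c %% 3) hc3 => [|[|[|k]]] //= _.
      - by left; exists (c %/ 3); L.
      - by right; exists (c %/ 3); L.
      - L.
    + subst c; apply: o1; L.
    + have := o2 (N - s) ltac:(L).
      by rewrite /Cm (_ : n.+1 - (3 * (N - s) + 1) = c); last L.
  split => //.
  have hc2 : 1 < 2 < n by L.
  have := hw 2 hc2 isT.
  rewrite /= (all 1) ?(all 2) //=; try L.
have [p ep] : exists p, m = p.+3 by exists (m - 3); L.
subst m.
have [k1 k2] := key p.+2 ltac:(L) (fun c hc _ => window G (a:=p.+2) (isT : 0 < p.+2) (ltnSn _) hc
   (bottom G (j:=c) ltac:(L))).
have hw1 : Hw n C p.+1 (fun c => c %% 3 != 0).
  move=> c hc hc3.
  have hcn : 1 <= c <= n by L.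
  exact: (window G (a:=p.+1) (c:=c) isT (ltnW (ltnSn _)) hc (k2 c hcn hc3)).
have [k3 _] := key p.+1 ltac:(L) hw1.
have := above G (a:=p.+1) (b:=3) isT ltac:(L) ltac:(L) k1.
by rewrite k3.
Qed.

Lemma hw_bottom m n C (G : Good m n C) p P : m = p.+3 -> Hw n C p.+2 P.
Proof.
move=> ep c hc _; have hm := Gm G.
apply: (window G (a:=p.+2)) => //; first L.
rewrite -ep; apply: (bottom G); L.
Qed.

Lemma rho1B m n C (G : Good m n C) N p : n = 3 * N + 1 -> m = p.+3 -> C p.+2 2 = false -> False.
Proof.
move=> hn ep c2.
have hm := Gm G; have hnn := Gn G.
have hw1 : Hw n C p.+2 (fun _ => true) := hw_bottom G ep.
have hr1 : 1 <= p.+2 <= m by L.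
have o1 := ones1 G hr1 (fun t _ => isT) hw1.
have pers : forall t, 3 * t + 2 < n -> C p.+2 (3 * t + 2) = false.
  elim=> [|t IH] ht; first by rewrite muln0 add0n.
  have z := IH ltac:(L).
  have hb : 1 <= 3 * t + 2 <= n by L.
  have [_ _ _ q4 _] := pred_ G hr1 hb z.
  have q5 := o1 t.+1 ltac:(L).
  case h: (C p.+2 (3 * t.+1 + 2)) => //.
  have hc : 1 < 3 * t + 4 < n by L.
  have := hw1 _ hc isT.
  rewrite (_ : (3 * t + 4).-1 = (3 * t + 2).+1); last L.
  rewrite (_ : 3 * t + 4 = 3 * t.+1 + 1); last L.
  rewrite (_ : (3 * t.+1 + 1).+1 = 3 * t.+1 + 2); last L.
  by rewrite q4 q5 h.
have zer0 : forall s, 1 <= s <= N -> C p.+2 (3 * s).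
  move=> s hs.
  have hb : 1 <= 3 * s.-1 + 2 <= n by L.
  have [_ _ _ q4 _] := pred_ G hr1 hb (pers s.-1 ltac:(L)).
  by move: q4; rewrite (_ : (3 * s.-1 + 2).+1 = 3 * s); last L.
have up2 : forall t, 3 * t + 2 < n -> C p.+1 (3 * t + 2).
  move=> t ht; apply: (above G (a:=p.+1) (b:=3*t+2)); [L | L | L | exact: pers].
have hw2 : Hw n C p.+1 (fun c => c %% 3 == 0).
  move=> c hc hc3.
  have hpm : p.+1 < m by L.
  apply: (window G (a:=p.+1) (c:=c) isT hpm hc).
  have [s es] : exists s, c = 3 * s by exists (c %/ 3); L.
  subst c; apply: zer0; L.
have GM := Good_mirror G.
have hr2 : 1 <= p.+1 <= m by L.
have hP2 : forall t, 3 * t + 2 < n -> (n.+1 - (3 * t + 2)) %% 3 == 0.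
  by move=> t ht; apply/eqP; L.
have o2 := ones1 GM hr2 hP2 (Hw_mirror hw2).
have hN : 1 <= N by L.
have c3N : C p.+1 (3 * N) = false.
  have hc : 1 < 3 * N < n by L.
  have := hw2 _ hc ltac:(apply/eqP; L).
  have a1 := up2 N.-1 ltac:(L).
  have a2 := o2 0 ltac:(L).
  move: a1 a2; rewrite /Cm (_ : (3 * N).-1 = 3 * N.-1 + 2); last L.
  rewrite (_ : n.+1 - (3 * 0 + 1) = (3 * N).+1); last L.
  move=> -> ->; by case: (C p.+1 (3 * N)).
have hb : 1 <= 3 * N <= n by L.
case: (alt_ G hr2 hb c3N) => [[l1 l2 l3]|[[r1 r2 r3]|[u1 u2 u3 u4]]].
- by move: l3; rewrite (_ : (3 * N).-1 = 3 * N.-1 + 2) ?pers //; L.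
- L.
have hp : 1 <= p by L.
have hw3 : Hw n C p (fun c => c %% 3 == 2).
  move=> c hc hc3.
  have hpm : p < m by L.
  apply: (window G (a:=p) (c:=c) hp hpm hc).
  have [s es] : exists s, c = 3 * s + 2 by exists (c %/ 3); L.
  subst c; apply: up2; L.
have hr3 : 1 <= p <= m by L.
have hP3 : forall t, 3 * t + 2 < n -> (3 * t + 2) %% 3 == 2.
  by move=> t ht; apply/eqP; L.
have hT3 : 3 * N.-1 + 1 <= n by L.
have o3 := ones1 G hr3 hP3 hw3 (T:=N.-1) hT3.
have hc : 1 < 3 * N.-1 + 2 < n by L.
have := hw3 _ hc ltac:(apply/eqP; L).
move: u2 u3; rewrite /=.
rewrite (_ : (3 * N.-1 + 2).-1 = 3 * N.-1 + 1); last L.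
rewrite (_ : (3 * N.-1 + 2).+1 = 3 * N); last L.
rewrite (_ : (3 * N).-1 = 3 * N.-1 + 2); last L.
by move=> -> ->; rewrite o3.
Qed.

Lemma rho1D m n C (G : Good m n C) N p : n = 3 * N + 1 -> m = p.+3 ->
  C p.+2 2 -> C p.+2 (3 * N) -> False.
Proof.
move=> hn ep c2 cN.
have hm := Gm G; have hnn := Gn G.
have hw1 : Hw n C p.+2 (fun _ => true) := hw_bottom G ep.
have hr1 : 1 <= p.+2 <= m by L.
have o1 := ones1 G hr1 (fun t _ => isT) hw1.
have [M eM] : exists M, N = M.+1 by exists N.-1; L.
subst N.
have hwin : forall t, t < M.+1 ->
    ~~ [&& C p.+2 (3 * t + 1), C p.+2 (3 * t + 2) & C p.+2 (3 * t + 3)].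
  move=> t ht; have hc : 1 < 3 * t + 2 < n by L.
  have := hw1 _ hc isT.
  rewrite (_ : (3 * t + 2).-1 = 3 * t + 1); last L.
  by rewrite (_ : (3 * t + 2).+1 = 3 * t + 3); last L.
have wc := win_count hwin.
have e3 : 3 * M.+1 = (3 * M + 2).+1 by L.
rewrite e3 zcS in wc.
rewrite e3 in cN.
rewrite (Zf cN) addn0 in wc.
have k0 : 1 <= p.+1 by L.
have k1 : p.+1 < m by L.
have hy : 3 * M + 2 <= n by L.
have i1 := I1 G k0 k1 c2 hy.
have z2 : C p.+2 (3 * M + 2) = false.
  have hc : 1 < 3 * M + 2 < n by L.
  have := hw1 _ hc isT.
  rewrite (_ : (3 * M + 2).-1 = 3 * M + 1); last L.
  have hT : 3 * M + 1 <= n by L.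
  rewrite (o1 M hT) cN /=.
  by case: (C p.+2 (3 * M + 2)).
have hb : 1 <= 3 * M + 2 <= n by L.
have u2 : C p.+1 (3 * M + 2) := above G k0 k1 hb z2.
have z3 : C p.+1 (3 * M + 2).+1 = false.
  have hc : 1 < (3 * M + 2).+1 < n by L.
  have := window G k0 k1 hc cN.
  have hr : 1 <= p.+1 <= m by L.
  have cn := coln G hr.
  rewrite (_ : (3 * M + 2).+2 = n); last L.
  rewrite /= u2 cn andbT.
  by case: (C p.+1 (3 * M + 2).+1).
have hr : 1 <= p.+1 <= m by L.
have hx : (3 * M + 2).+1 <= n by L.
have d := density G hx hr.
rewrite zcS (Zt z3) in d.
L.
Qed.

Lemma rho1 m n C (G : Good m n C) N : n = 3 * N + 1 -> False.
Proof.
move=> hn.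
have hm := Gm G; have hnn := Gn G.
have [p ep] : exists p, m = p.+3 by exists (m - 3); L.
case c2: (C p.+2 2); last exact: (rho1B G hn ep c2).
case cN: (C p.+2 (3 * N)); first exact: (rho1D G hn ep c2 cN).
apply: (rho1B (Good_mirror G) hn ep).
by rewrite /Cm (_ : n.+1 - 2 = 3 * N); last L.
Qed.


Unset Implicit Arguments.

Theorem mainTheorem15 (m n : nat) (C : config) :
  2 < m -> 2 < n -> ES m n C ->
  forall k j : nat, 1 <= m - 1 - 2 * k -> 1 <= j <= n ->
    C (m - 1 - 2 * k) j = ~~ (j %% 3 == 2).
Proof.
move=> hm hn hES k j hk hj.
have G := Good_of_ES hm hn hES.
have hdiv : n = 3 * (n %/ 3) + n %% 3 by rewrite mulnC -divn_eq.
case e: (n %% 3) hdiv => [|[|[|r]]] hdiv.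
- rewrite addn0 in hdiv.
  exact: (main0 G hdiv hk hj).
- exfalso; exact: (rho1 G hdiv).
- exfalso; exact: (rho2 G hdiv).
- have := ltn_pmod n (isT : 0 < 3); rewrite e; L.
Qed.
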